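(* Let $\mathcal{H}$ be a subcategory of $\mathcal{C}$ that is resolving and specially precovering in $\mathcal{C}$. Then $\mathcal{H}\cap\mathcal{H}^{\perp}$ is an $\mathcal{H}$-injective cogenerator for $\mathcal{H}$.
   Context: $\mathcal{C}=(\mathcal{C},\mathbb{E},\mathfrak{s})$ is an extriangulated category (in the sense of Nakaoka–Palu) with enough projectives and enough injectives; a conflation realizing $\delta\in\mathbb{E}(C,A)$ is written as an $\mathbb{E}$-triangle $A\to B\to C\dashrightarrow$. All subcategories are full, additive, closed under isomorphisms and direct summands. Higher extensions: $\mathbb{E}^1=\mathbb{E}$, $\mathbb{E}^{i+1}(X,Y)=\mathbb{E}(X,\Sigma^iY)\cong\mathbb{E}(\Omega^iX,Y)$. $\mathcal{H}^{\perp}=\{Y:\mathbb{E}^i(H,Y)=0\ \forall i\ge1,\forall H\in\mathcal{H}\}$. $\mathcal{H}$ is resolving if it contains all projective objects and is closed under extensions and CoCones (for every $\mathbb{E}$-triangle $A\to B\to C\dashrightarrow$: $A,C\in\mathcal{H}\Rightarrow B\in\mathcal{H}$; $B,C\in\mathcal{H}\Rightarrow A\in\mathcal{H}$). $\mathcal{H}$ is specially precovering in $\mathcal{C}$ if every $C\in\mathcal{C}$ admits an $\mathbb{E}$-triangle $K\to H\to C\dashrightarrow$ with $H\in\mathcal{H}$ and $\mathbb{E}(\mathcal{H},K)=0$. $\mathcal{W}$ is an $\mathcal{H}$-injective cogenerator for $\mathcal{H}$ if $\mathcal{W}\subseteq\mathcal{H}$, for each $H\in\mathcal{H}$ there is an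 $\mathbb{E}$-triangle $H\to W\to H'\dashrightarrow$ with $W\in\mathcal{W}$, $H'\in\mathcal{H}$, and $\mathbb{E}^i(H,W)=0$ for all $H\in\mathcal{H}$, $W\in\mathcal{W}$, $i\ge1$. *)

(* Defs.v *)
From HB Require Import structures.
From mathcomp Require Import all_boot all_algebra.
Set Implicit Arguments. Unset Strict Implicit. Unset Printing Implicit Defensive.
Import GRing.Theory.
Local Open Scope ring_scope.

Record AddCat := {
  Obj : Type;
  Hom : Obj -> Obj -> zmodType;
  comp : forall X Y Z : Obj, Hom Y Z -> Hom X Y -> Hom X Z;
  idm : forall X : Obj, Hom X X;
  compA : forall X Y Z W (h : Hom Z W) (g : Hom Y Z) (f : Hom X Y),
      comp h (comp g f) = comp (comp h g) f;
  comp1m : forall X Y (f : Hom X Y), comp (idm Y) f = f;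
  compm1 : forall X Y (f : Hom X Y), comp f (idm X) = f;
  compDl : forall X Y Z (g1 g2 : Hom Y Z) (f : Hom X Y),
      comp (g1 + g2) f = comp g1 f + comp g2 f;
  compDr : forall X Y Z (g : Hom Y Z) (f1 f2 : Hom X Y),
      comp g (f1 + f2) = comp g f1 + comp g f2;
  zeroO : Obj;
  zeroO_init : forall X (f g : Hom zeroO X), f = g;
  zeroO_term : forall X (f g : Hom X zeroO), f = g;
  bp : Obj -> Obj -> Obj;
  bin1 : forall X Y, Hom X (bp X Y);
  bin2 : forall X Y, Hom Y (bp X Y);
  bpr1 : forall X Y, Hom (bp X Y) X;
  bpr2 : forall X Y, Hom (bp X Y) Y;
  bp11 : forall X Y, comp (bpr1 X Y) (bin1 X Y) = idm X;
  bp22 : forall X Y, comp (bpr2 X Y) (bin2 X Y) = idm Y;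
  bp12 : forall X Y, comp (bpr1 X Y) (bin2 X Y) = 0;
  bp21 : forall X Y, comp (bpr2 X Y) (bin1 X Y) = 0;
  bpsum : forall X Y, comp (bin1 X Y) (bpr1 X Y) + comp (bin2 X Y) (bpr2 X Y)
                      = idm (bp X Y)
}.

Arguments comp {a X Y Z}.
Arguments idm {a}.
Arguments bin1 {a}. Arguments bin2 {a}. Arguments bpr1 {a}. Arguments bpr2 {a}.

Section AddDefs.
Variable C : AddCat.
Definition is_iso (X Y : Obj C) (f : Hom X Y) : Prop :=
  exists g : Hom Y X, comp g f = idm X /\ comp f g = idm Y.
Definition isomorphic (X Y : Obj C) : Prop := exists f : Hom X Y, is_iso f.
Definition hom_bp (X X' Y Y' : Obj C) (f : Hom X Y) (f' : Hom X' Y')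
  : Hom (bp X X') (bp Y Y') :=
  comp (bin1 Y Y') (comp f (bpr1 X X')) + comp (bin2 Y Y') (comp f' (bpr2 X X')).
End AddDefs.

Record Extri := {
  cat :> AddCat;
  (* the biadditive functor E : C^op x C -> Ab, written E C A *)
  Ext : Obj cat -> Obj cat -> zmodType;
  push : forall (Z A A' : Obj cat), Hom A A' -> Ext Z A -> Ext Z A';
  pull : forall (Z' Z A : Obj cat), Hom Z' Z -> Ext Z A -> Ext Z' A;
  pushD : forall Z A A' (a : Hom A A') (d1 d2 : Ext Z A),
      push a (d1 + d2) = push a d1 + push a d2;
  pushDm : forall Z A A' (a1 a2 : Hom A A') (d : Ext Z A),
      push (a1 + a2) d = push a1 d + push a2 d;
  push1 : forall Z A (d : Ext Z A), push (idm A) d = d;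
  pushM : forall Z A A' A'' (a : Hom A A') (b : Hom A' A'') (d : Ext Z A),
      push (comp b a) d = push b (push a d);
  pullD : forall Z' Z A (c : Hom Z' Z) (d1 d2 : Ext Z A),
      pull c (d1 + d2) = pull c d1 + pull c d2;
  pullDm : forall Z' Z A (c1 c2 : Hom Z' Z) (d : Ext Z A),
      pull (c1 + c2) d = pull c1 d + pull c2 d;
  pull1 : forall Z A (d : Ext Z A), pull (idm Z) d = d;
  pullM : forall Z'' Z' Z A (c : Hom Z' Z) (c' : Hom Z'' Z') (d : Ext Z A),
      pull (comp c c') d = pull c' (pull c d);
  push_pull : forall Z' Z A A' (a : Hom A A') (c : Hom Z' Z) (d : Ext Z A),
      push a (pull c d) = pull c (push a d);
  (* the realization s : realizes d x y  means  s(d) = [A -x-> B -y-> Z] *)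
  realizes : forall (Z A : Obj cat), Ext Z A ->
      forall B : Obj cat, Hom A B -> Hom B Z -> Prop;
  real_ex : forall Z A (d : Ext Z A),
      exists B (x : Hom A B) (y : Hom B Z), realizes d x y;
  real_class : forall Z A (d : Ext Z A) B (x : Hom A B) (y : Hom B Z),
      realizes d x y -> forall B' (x' : Hom A B') (y' : Hom B' Z),
      (realizes d x' y' <->
       exists b : Hom B B', is_iso b /\ comp b x = x' /\ comp y' b = y);
  real_morph : forall Z A Z' A' (d : Ext Z A) (d' : Ext Z' A')
      (a : Hom A A') (c : Hom Z Z') B (x : Hom A B) (y : Hom B Z)
      B' (x' : Hom A' B') (y' : Hom B' Z'),
      push a d = pull c d' -> realizes d x y -> realizes d' x' y' ->
      exists b : Hom B B', comp b x = comp x' a /\ comp y' b = comp c y;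
  ET2_zero : forall Z A, realizes (0 : Ext Z A) (bin1 A Z) (bpr2 A Z);
  ET2_sum : forall Z A Z' A' (d : Ext Z A) (d' : Ext Z' A')
      B (x : Hom A B) (y : Hom B Z) B' (x' : Hom A' B') (y' : Hom B' Z'),
      realizes d x y -> realizes d' x' y' ->
      realizes (push (bin1 A A') (pull (bpr1 Z Z') d)
                + push (bin2 A A') (pull (bpr2 Z Z') d'))
               (hom_bp x x') (hom_bp y y');
  ET3 : forall Z A Z' A' (d : Ext Z A) (d' : Ext Z' A')
      B (x : Hom A B) (y : Hom B Z) B' (x' : Hom A' B') (y' : Hom B' Z')
      (a : Hom A A') (b : Hom B B'),
      realizes d x y -> realizes d' x' y' -> comp b x = comp x' a ->
      exists c : Hom Z Z', comp c y = comp y' b /\ push a d = pull c d';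
  ET3op : forall Z A Z' A' (d : Ext Z A) (d' : Ext Z' A')
      B (x : Hom A B) (y : Hom B Z) B' (x' : Hom A' B') (y' : Hom B' Z')
      (b : Hom B B') (c : Hom Z Z'),
      realizes d x y -> realizes d' x' y' -> comp y' b = comp c y ->
      exists a : Hom A A', comp x' a = comp b x /\ push a d = pull c d';
  ET4 : forall (A B D F Cc : Obj cat) (d : Ext D A) (d' : Ext F B)
      (f : Hom A B) (f' : Hom B D) (g : Hom B Cc) (g' : Hom Cc F),
      realizes d f f' -> realizes d' g g' ->
      exists (E : Obj cat) (h : Hom A Cc) (h' : Hom Cc E) (dd : Hom D E)
             (e : Hom E F) (d'' : Ext E A),
        [/\ h = comp g f, comp dd f' = comp h' g, comp e h' = g',
            realizes d'' h h'
          & [/\ realizes (push f' d') dd e,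
                 pull dd d'' = d
               & push f d'' = pull e d']];
  ET4op : forall (A B D F Cc : Obj cat) (d : Ext A D) (d' : Ext B F)
      (f' : Hom D B) (f : Hom B A) (g' : Hom F Cc) (g : Hom Cc B),
      realizes d f' f -> realizes d' g' g ->
      exists (E : Obj cat) (h : Hom Cc A) (h' : Hom E Cc) (dd : Hom E D)
             (e : Hom F E) (d'' : Ext A E),
        [/\ h = comp f g, comp f' dd = comp g h', comp h' e = g',
            realizes d'' h' h
          & [/\ realizes (pull f' d') e dd,
                 push dd d'' = d
               & pull f d'' = push e d']]
}.

Arguments Ext : clear implicits.
Arguments push {e Z A A'}.
Arguments pull {e Z' Z A}.
Arguments realizes {e Z A} _ {B}.

Section ExtriDefs.
Variable C : Extri.

Definition Etriangle (A B Z : Obj C) (x : Hom A B) (y : Hom B Z) : Prop :=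
  exists d : Ext C Z A, realizes d x y.

Definition projective (P : Obj C) : Prop :=
  forall A B Z (x : Hom A B) (y : Hom B Z), Etriangle x y ->
  forall c : Hom P Z, exists b : Hom P B, comp y b = c.
Definition injective (I : Obj C) : Prop :=
  forall A B Z (x : Hom A B) (y : Hom B Z), Etriangle x y ->
  forall a : Hom A I, exists b : Hom B I, comp b x = a.
Definition enough_projectives : Prop :=
  forall Z : Obj C, exists A P (x : Hom A P) (y : Hom P Z),
    projective P /\ Etriangle x y.
Definition enough_injectives : Prop :=
  forall A : Obj C, exists I Z (x : Hom A I) (y : Hom I Z),
    injective I /\ Etriangle x y.

(* syzygy n X K : K is an n-th syzygy  Omega^n X  (via E-triangles K -> P -> Z
   with P projective) *)
Inductive syzygy : nat -> Obj C -> Obj C -> Prop :=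
| syz0 X : syzygy 0 X X
| syzS n X Z K P (x : Hom K P) (y : Hom P Z) :
    syzygy n X Z -> projective P -> Etriangle x y -> syzygy n.+1 X K.

(* E^{n+1}(X,Y) = E(Omega^n X, Y) = 0 *)
Definition ExtS_zero (n : nat) (X Y : Obj C) : Prop :=
  forall K, syzygy n X K -> forall d : Ext C K Y, d = 0.

Definition subcategory (H : Obj C -> Prop) : Prop :=
  [/\ H (zeroO C),
      (forall X Y, H X -> H Y -> H (bp X Y)),
      (forall X Y, isomorphic X Y -> H X -> H Y)
    & (forall X Y, H (bp X Y) -> H X)].

Definition perp (H : Obj C -> Prop) (Y : Obj C) : Prop :=
  forall X, H X -> forall n : nat, ExtS_zero n X Y.

Definition resolving (H : Obj C -> Prop) : Prop :=
  [/\ (forall P, projective P -> H P),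
      (forall A B Z (x : Hom A B) (y : Hom B Z), Etriangle x y ->
          H A -> H Z -> H B)
    & (forall A B Z (x : Hom A B) (y : Hom B Z), Etriangle x y ->
          H B -> H Z -> H A)].

Definition specially_precovering (H : Obj C -> Prop) : Prop :=
  forall Z : Obj C, exists K Hh (x : Hom K Hh) (y : Hom Hh Z),
    [/\ Etriangle x y, H Hh & forall H', H H' -> forall d : Ext C H' K, d = 0].

Definition injective_cogenerator (H W : Obj C -> Prop) : Prop :=
  [/\ (forall X, W X -> H X),
      (forall X, H X -> exists Wo H' (x : Hom X Wo) (y : Hom Wo H'),
          [/\ Etriangle x y, W Wo & H H'])
    & (forall X Y, H X -> W Y -> forall n : nat, ExtS_zero n X Y)].

End ExtriDefs.

(* Main.v *)
Require Import Defs.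
From mathcomp Require Import all_boot all_algebra.
Set Implicit Arguments. Unset Strict Implicit. Unset Printing Implicit Defensive.
Import GRing.Theory.
Local Open Scope ring_scope.
Notation Hom := Defs.Hom.
Notation Ext := Defs.Ext.
Notation comp := Defs.comp.
Notation push := Defs.push.
Notation pull := Defs.pull.
Notation bin1 := Defs.bin1.
Notation bin2 := Defs.bin2.
Notation bpr1 := Defs.bpr1.
Notation bpr2 := Defs.bpr2.
Notation idm := Defs.idm.
Notation injective := Defs.injective.
Notation bpsum := Defs.bpsum.
Notation bp21 := Defs.bp21.
Notation bp12 := Defs.bp12.
Notation bp22 := Defs.bp22.
Notation bp11 := Defs.bp11.
Notation compDr := Defs.compDr.
Notation compDl := Defs.compDl.
Notation compm1 := Defs.compm1.
Notation comp1m := Defs.comp1m.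
Notation compA := Defs.compA.

Lemma self_eq0 (V : zmodType) (x : V) : x = x + x -> x = 0.
Proof. move=> h; have := congr1 (fun y => y - x) h; by rewrite subrr addrK => ->. Qed.

Section Basics.
Lemma comp0r (C : AddCat) (X Y Z : Obj C) (g : Hom Y Z) : comp g (0 : Hom X Y) = 0.
Proof. by apply: self_eq0; rewrite -compDr addr0. Qed.
Lemma comp0l (C : AddCat) (X Y Z : Obj C) (f : Hom X Y) : comp (0 : Hom Y Z) f = 0.
Proof. by apply: self_eq0; rewrite -compDl addr0. Qed.
Lemma compNr (C : AddCat) (X Y Z : Obj C) (g : Hom Y Z) (f : Hom X Y) :
  comp g (- f) = - comp g f.
Proof. by apply: (addrI (comp g f)); rewrite -compDr !subrr comp0r. Qed.
Lemma compNl (C : AddCat) (X Y Z : Obj C) (g : Hom Y Z) (f : Hom X Y) :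
  comp (- g) f = - comp g f.
Proof. by apply: (addrI (comp g f)); rewrite -compDl !subrr comp0l. Qed.
Lemma compBr (C : AddCat) (X Y Z : Obj C) (g : Hom Y Z) (f1 f2 : Hom X Y) :
  comp g (f1 - f2) = comp g f1 - comp g f2.
Proof. by rewrite compDr compNr. Qed.
Lemma compBl (C : AddCat) (X Y Z : Obj C) (g1 g2 : Hom Y Z) (f : Hom X Y) :
  comp (g1 - g2) f = comp g1 f - comp g2 f.
Proof. by rewrite compDl compNl. Qed.

Lemma push0 (C : Extri) (Z A A' : Obj C) (a : Hom A A') : push a (0 : Ext C Z A) = 0.
Proof. by apply: self_eq0; rewrite -pushD addr0. Qed.
Lemma push0m (C : Extri) (Z A A' : Obj C) (d : Ext C Z A) : push (0 : Hom A A') d = 0.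
Proof. by apply: self_eq0; rewrite -pushDm addr0. Qed.
Lemma pull0 (C : Extri) (Z' Z A : Obj C) (c : Hom Z' Z) : pull c (0 : Ext C Z A) = 0.
Proof. by apply: self_eq0; rewrite -pullD addr0. Qed.
Lemma pull0m (C : Extri) (Z' Z A : Obj C) (d : Ext C Z A) : pull (0 : Hom Z' Z) d = 0.
Proof. by apply: self_eq0; rewrite -pullDm addr0. Qed.
Lemma pushN (C : Extri) (Z A A' : Obj C) (a : Hom A A') (d : Ext C Z A) :
  push a (- d) = - push a d.
Proof. by apply: (addrI (push a d)); rewrite -pushD !subrr push0. Qed.
Lemma pushNm (C : Extri) (Z A A' : Obj C) (a : Hom A A') (d : Ext C Z A) :
  push (- a) d = - push a d.
Proof. by apply: (addrI (push a d)); rewrite -pushDm !subrr push0m. Qed.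
Lemma pullN (C : Extri) (Z' Z A : Obj C) (c : Hom Z' Z) (d : Ext C Z A) :
  pull c (- d) = - pull c d.
Proof. by apply: (addrI (pull c d)); rewrite -pullD !subrr pull0. Qed.
End Basics.

Lemma tri_comp0 (C : Extri) (Z A B : Obj C) (d : Ext C Z A) (x : Hom A B) (y : Hom B Z) :
  realizes d x y -> comp y x = 0.
Proof.
move=> hr.
have e : comp (comp x (bpr1 A (zeroO C))) (bin1 A (zeroO C)) = comp x (idm A).
  by rewrite -compA bp11.
have [c [hc _]] := ET3 (ET2_zero (zeroO C) A) hr e.
have := congr1 (fun f => comp f (bin1 A (zeroO C))) hc => /=.
by rewrite -!compA bp21 comp0r bp11 compm1 => <-.
Qed.

Lemma push_infl0 (C : Extri) (Z A B : Obj C) (d : Ext C Z A) (x : Hom A B) (y : Hom B Z) :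
  realizes d x y -> push x d = 0.
Proof.
move=> hr.
have e : comp (bin1 B Z) x = comp (bin1 B Z) x by [].
have [c [_ ->]] := ET3 hr (ET2_zero Z B) e.
by rewrite pull0.
Qed.

Lemma lift_defl (C : Extri) (Z A B W : Obj C) (d : Ext C Z A) (x : Hom A B) (y : Hom B Z)
  (c : Hom W Z) : realizes d x y -> pull c d = 0 -> exists l : Hom W B, comp y l = c.
Proof.
move=> hr h0.
have e : push (idm A) (0 : Ext C W A) = pull c d by rewrite push0 h0.
have [b [_ hb]] := real_morph e (ET2_zero W A) hr.
exists (comp b (bin2 A W)).
by rewrite compA hb -compA bp22 compm1.
Qed.

Lemma ext_infl (C : Extri) (Z A B V : Obj C) (d : Ext C Z A) (x : Hom A B) (y : Hom B Z)
  (z : Hom A V) : realizes d x y -> push z d = 0 -> exists z' : Hom B V, comp z' x = z.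
Proof.
move=> hr h0.
have e : push z d = pull (idm Z) (0 : Ext C Z V) by rewrite h0 pull0.
have [b [hb _]] := real_morph e hr (ET2_zero Z V).
exists (comp (bpr1 V Z) b).
by rewrite -compA hb compA bp11 comp1m.
Qed.

Lemma ker_infl (C : Extri) (Z A B W : Obj C) (d : Ext C Z A) (x : Hom A B) (y : Hom B Z)
  (g : Hom W B) : realizes d x y -> comp y g = 0 -> exists w : Hom W A, comp x w = g.
Proof.
move=> hr h0.
have e : comp y (comp g (bpr1 W (zeroO C))) = comp (0 : Hom (zeroO C) Z) (bpr2 W (zeroO C)).
  by rewrite compA h0 !comp0l.
have [a [ha _]] := ET3op (ET2_zero (zeroO C) W) hr e.
by exists a; rewrite ha -compA bp11 compm1.
Qed.

Lemma retr_zero (C : Extri) (Z A B : Obj C) (d : Ext C Z A) (x : Hom A B) (y : Hom B Z)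
  (r : Hom B A) : realizes d x y -> comp r x = idm A -> d = 0.
Proof.
move=> hr hrx.
by rewrite -(push1 d) -hrx pushM (push_infl0 hr) push0.
Qed.

Lemma exact_pull (C : Extri) (Z A B A' : Obj C) (d : Ext C Z A) (x : Hom A B) (y : Hom B Z)
  (t : Ext C Z A') : realizes d x y -> pull y t = 0 -> exists psi : Hom A A', push psi d = t.
Proof.
move=> hr h0.
have [T [al [be ht]]] := real_ex t.
have [l hl] := lift_defl ht h0.
have e : comp be l = comp (idm Z) y by rewrite comp1m.
have [psi [_ hp]] := ET3op hr ht e.
by exists psi; rewrite hp pull1.
Qed.

Lemma syz_H (C : Extri) (H : Obj C -> Prop) : resolving H ->
  forall n X K, syzygy n X K -> H X -> H K.
Proof.
case=> hP _ hco n X K s; elim: s => // m X0 Z K0 P x y _ IH hp ht hX.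
exact: (hco _ _ _ x y ht (hP _ hp) (IH hX)).
Qed.

Lemma perp_key (C : Extri) (H : Obj C -> Prop) (K N I : Obj C) (ze : Ext C I K)
 (a : Hom K N) (b : Hom N I) : resolving H -> injective I -> H N ->
 (forall H', H H' -> forall d : Ext C H' K, d = 0) -> realizes ze a b ->
 forall H', H H' -> forall d : Ext C H' N, d = 0.
Proof.
case=> _ hext _ hI hN hK hr H' hH' d.
have [B [s [t hst]]] := real_ex d.
have hB : H B := hext _ _ _ s t (ex_intro _ d hst) hN hH'.
have [n hn] := hI _ _ _ s t (ex_intro _ d hst) b.
have [r hr'] := lift_defl (c:=n) hr (hK _ hB _).
have e0 : comp b (comp r s - idm N) = 0 by rewrite compBr compA hr' hn compm1 subrr.
have [z hz] := ker_infl hr e0.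
have [z' hz'] := ext_infl (z:=z) hst (hK _ hH' _).
apply: (retr_zero (r:= r - comp a z') hst).
by rewrite compBl -compA hz' hz opprB addrC subrK.
Qed.

Theorem lemma4p7 (C : Extri) (H : Obj C -> Prop) :
  enough_projectives C -> enough_injectives C ->
  subcategory H -> resolving H -> specially_precovering H ->
  injective_cogenerator H (fun X => H X /\ perp H X).
Proof.
move=> _ hinj hsub hres hsp.
have [_ _ hiso _] := hsub.
have hres' := hres; case: hres' => _ hext _.
have key : forall W, H W -> (forall H', H H' -> forall d : Ext C H' W, d = 0) -> perp H W.
  move=> W hW hz X' hX' n K' hs d; exact: hz _ (syz_H hres hs hX') d.
split.
- by move=> X [].
- move=> X hX.
  have [I [Z [x [y [hI [dl hd]]]]]] := hinj X.
  have [K [H0 [k [p [[ep he] hH0 hK]]]]] := hsp Z.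
  have [N [a [b hab]]] := real_ex (pull y ep).
  have [E [h [h' [dd [e [d'' [hh hxd hae hr'' [hed hpush hpull]]]]]]]] := ET4op hd hab.
  have h0 : pull x (pull y ep) = 0 by rewrite -pullM (tri_comp0 hd) pull0m.
  rewrite h0 in hed.
  have [sg hsg] := lift_defl (c:=idm X) hed (ltac:(by rewrite pull0)).
  have [pi hpi] := ext_infl (z:=idm K) hed (ltac:(by rewrite push0)).
  have ddE : comp dd e = 0 := tri_comp0 hed.
  have hth : pull y (push pi d'' - ep) = 0.
    by rewrite pullD pullN -push_pull hpull -pushM hpi push1 subrr.
  have [psi hpsi] := exact_pull hd hth.
  pose pi' := pi - comp psi dd.
  have hpi'd : push pi' d'' = ep.
    rewrite /pi' pushDm pushNm pushM hpush hpsi opprB.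
    by rewrite addrC subrK.
  have hpi'e : comp pi' e = idm K by rewrite /pi' compBl -compA ddE comp0r subr0.
  clearbody pi'.
  pose sg' := sg - comp e (comp pi' sg).
  have hddsg : comp dd sg' = idm X by rewrite /sg' compBr compA ddE comp0l subr0.
  have hpisg : comp pi' sg' = 0 by rewrite /sg' compBr compA hpi'e comp1m subrr.
  clearbody sg'.
  have hsum : comp sg' dd + comp e pi' = idm E.
    pose t := idm E - (comp sg' dd + comp e pi').
    have ht1 : comp dd t = 0.
      by rewrite /t compBr compDr compm1 !compA hddsg ddE comp1m comp0l addr0 subrr.
    have [w hw] := ker_infl hed ht1.
    have ht2 : comp pi' t = 0.
      by rewrite /t compBr compDr compm1 !compA hpisg hpi'e comp1m comp0l add0r subrr.
    have hw0 : w = 0.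
      by rewrite -(comp1m w) -hpi'e -compA hw ht2.
    apply/eqP; rewrite eq_sym -subr_eq0; apply/eqP.
    by rewrite -/t -hw hw0 comp0r.
  have hsplit : realizes (0 : Ext C K X) sg' pi'.
    apply/(real_class (ET2_zero K X)).
    exists (comp sg' (bpr1 X K) + comp e (bpr2 X K)); split; last split.
    + exists (comp (bin1 X K) dd + comp (bin2 X K) pi'); split.
      * rewrite !compDl !compDr -!compA !(compA dd) !(compA pi') hddsg hpisg ddE hpi'e.
        by rewrite !comp1m !comp0l !comp0r addr0 add0r bpsum.
      * rewrite !compDl !compDr -!compA !(compA (bpr1 X K)) !(compA (bpr2 X K)).
        by rewrite bp11 bp22 bp12 bp21 !comp1m !comp0l !comp0r addr0 add0r hsum.
    + by rewrite compDl -!compA bp11 bp21 compm1 comp0r addr0.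
    + by rewrite compDr !compA hpisg hpi'e comp0l comp1m add0r.
  have [E2 [hh2 [h2' [dd2 [e2 [d3 [hhh _ _ hr3 [hr4 _ _]]]]]]]] := ET4 hsplit hr''.
  rewrite hpi'd in hr4.
  have [bi [hbi _]] := (real_class he _ _).1 hr4.
  have hE2 : H E2 := hiso _ _ (ex_intro _ bi hbi) hH0.
  have hN : H N := hext _ _ _ hh2 h2' (ex_intro _ d3 hr3) hX hE2.
  exists N, E2, hh2, h2'; split.
  + by exists d3.
  + by split => //; apply: key => //; exact: (perp_key hres hI hN hK hab).
  + exact: hE2.
- move=> X Y hX [_ hY] n; exact: hY X hX n.
Qed.
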